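(* Let $L,W,l>0$, $\Omega_2=(-l,L+l)\times(-l,W+l)$, and let $\Omega_3\subseteq\mathbb{R}^2$ be a bounded open set with smooth boundary such that $\overline{\Omega}_2\subseteq\Omega_3$. Let $\chi\in\mathcal{C}^\infty_0(\overline{\Omega}_3)$ be a smooth cutoff function with $\chi=1$ on $\overline{\Omega}_2$. For $M>0$ let $\gamma\in\mathcal{C}^\infty([0,1];[0,\infty))$ satisfy $\operatorname{supp}\gamma\subseteq(0,1)$ and $\gamma(t)=M$ for all $t\in[1/4,3/4]$; set $\mathbf{y}^*(\mathbf{x},t)=(\gamma(t)\chi(\mathbf{x}),0)'$ for $(\mathbf{x},t)\in\overline{\Omega}_3\times[0,1]$, and let $\mathcal{Y}(\mathbf{x},s,t)$ be the flow solving $\frac{d}{dt}\mathcal{Y}(\mathbf{x},s,t)=\mathbf{y}^*(\mathcal{Y}(\mathbf{x},s,t),t)$, $\mathcal{Y}(\mathbf{x},s,s)=\mathbf{x}$. Then, if $M>0$ is chosen large enough, $\mathcal{Y}(\mathbf{x},0,1)\notin\overline{\Omega}_2$ for all $\mathbf{x}\in\overline{\Omega}_2$. *)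

(* Defs.v *)
From Stdlib Require Import Reals.
From Coquelicot Require Import Coquelicot.
Open Scope R_scope.

Definition pd1 (f : R * R -> R) (p : R * R) : R :=
  Derive (fun t => f (t, snd p)) (fst p).
Definition pd2 (f : R * R -> R) (p : R * R) : R :=
  Derive (fun t => f (fst p, t)) (snd p).

Fixpoint Ck2 (k : nat) (f : R * R -> R) : Prop :=
  match k with
  | O => forall p, continuous f p
  | S k' =>
      (forall p, ex_derive (fun t => f (t, snd p)) (fst p)) /\
      (forall p, ex_derive (fun t => f (fst p, t)) (snd p)) /\
      Ck2 k' (pd1 f) /\ Ck2 k' (pd2 f)
  end.

Definition smooth2 (f : R * R -> R) : Prop := forall k, Ck2 k f.

Definition smooth_on_01 (g : R -> R) : Prop :=
  forall n t, 0 < t < 1 -> ex_derive_n g n t.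

Definition bounded2 (A : R * R -> Prop) : Prop :=
  exists B, forall p, A p -> Rabs (fst p) <= B /\ Rabs (snd p) <= B.

Definition closure2 (A : R * R -> Prop) (p : R * R) : Prop :=
  forall P, locally p P -> exists q, A q /\ P q.

(* smooth boundary, via a smooth defining function with nonvanishing
   gradient on its zero set: A = {rho < 0}, boundary A = {rho = 0}. *)
Definition smooth_boundary (A : R * R -> Prop) : Prop :=
  exists rho : R * R -> R,
    smooth2 rho /\
    (forall p, A p <-> rho p < 0) /\
    (forall p, rho p = 0 -> pd1 rho p <> 0 \/ pd2 rho p <> 0).

Definition Omega2 (L W l : R) (p : R * R) : Prop :=
  -l < fst p < L + l /\ -l < snd p < W + l.
Definition Omega2bar (L W l : R) (p : R * R) : Prop :=
  -l <= fst p <= L + l /\ -l <= snd p <= W + l.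

Definition smooth_compact_support_in (A : R * R -> Prop) (chi : R * R -> R) : Prop :=
  smooth2 chi /\
  exists K : R * R -> Prop,
    closed K /\ bounded2 K /\ (forall p, K p -> A p) /\
    (forall p, ~ K p -> chi p = 0).

(* Y is the flow of y*(x,t) = (gamma t * chi x, 0)' on closure(Omega3) x [0,1]:
   for each x, s, the map t |-> Y x s t is continuous on [0,1],
   differentiable on (0,1) and solves the ODE there, with Y x s s = x. *)
Definition is_flow (Omega3 : R * R -> Prop) (gamma : R -> R) (chi : R * R -> R)
    (Y : R * R -> R -> R -> R * R) : Prop :=
  forall x s, closure2 Omega3 x -> 0 <= s <= 1 ->
    Y x s s = x /\
    (forall t, 0 <= t <= 1 -> continuous (fun u => fst (Y x s u)) t /\
                            continuous (fun u => snd (Y x s u)) t) /\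
    (forall t, 0 < t < 1 ->
       is_derive (fun u => fst (Y x s u)) t (gamma t * chi (Y x s t)) /\
       is_derive (fun u => snd (Y x s u)) t 0).

(* Main.v *)
Require Import Defs.
From Stdlib Require Import Reals Lra.
From Coquelicot Require Import Coquelicot.
Open Scope R_scope.

Lemma ballR (x y e : R) : ball x e y <-> Rabs (y - x) < e.
Proof. reflexivity. Qed.

Lemma cont_eps (f : R -> R) t : continuous f t -> forall e, 0 < e ->
  exists d, 0 < d /\ forall u, Rabs (u - t) < d -> Rabs (f u - f t) < e.
Proof.
  intros Hc e He.
  assert (H := Hc (ball (f t) (mkposreal e He)) (locally_ball _ _)).
  destruct H as [d Hd]. exists d. split. apply cond_pos.
  intros u Hu. apply (Hd u). exact Hu.
Qed.

Lemma barrier (f D : R -> R) a b c dl :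
  a <= b -> 0 < dl ->
  (forall t, a <= t <= b -> continuous f t) ->
  (forall t, a < t < b -> is_derive f t (D t)) ->
  (forall t, a <= t <= b -> c - dl < f t < c + dl -> 0 <= D t) ->
  c <= f a -> c <= f b.
Proof.
  intros Hab Hdl Hc Hd Hband Ha.
  destruct (Rle_or_lt c (f b)) as [H|Hb]; [exact H|exfalso].
  set (E := fun t => a <= t <= b /\ c <= f t).
  destruct (completeness E) as [s [Hub Hlst]].
  { exists b. intros t [Ht _]. lra. }
  { exists a. split; [lra|exact Ha]. }
  assert (Has : a <= s) by (apply Hub; split; [lra|exact Ha]).
  assert (Hsb : s <= b) by (apply Hlst; intros t [Ht _]; lra).
  assert (Hfs : c <= f s).
  { destruct (Rle_or_lt c (f s)) as [H|H]; [exact H|exfalso].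
    destruct (cont_eps f s (Hc s (conj Has Hsb)) (c - f s)) as [e [He Hce]]; [lra|].
    assert (s <= s - e/2); [|lra].
    apply Hlst. intros t [Ht Hft].
    destruct (Rle_or_lt t (s - e/2)) as [H1|H1]; [exact H1|exfalso].
    assert (t <= s) by (apply Hub; split; assumption).
    assert (Rabs (t - s) < e) by (apply Rabs_def1; lra).
    specialize (Hce t H2). apply Rabs_def2 in Hce. lra. }
  assert (Hsb' : s < b) by (destruct Hsb as [H|H]; [exact H| subst; lra]).
  destruct (cont_eps f s (Hc s (conj Has Hsb)) dl Hdl) as [e [He Hce]].
  set (t0 := Rmin b (s + e/2)).
  assert (Ht0 : s < t0 /\ t0 <= b /\ t0 <= s + e/2).
  { unfold t0. split; [apply Rmin_glb_lt; lra|split; [apply Rmin_l|apply Rmin_r]]. }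
  assert (Hnot : forall u, s < u <= b -> f u < c).
  { intros u Hu. destruct (Rle_or_lt c (f u)) as [H|H]; [|exact H].
    assert (u <= s) by (apply Hub; split; [lra|exact H]). lra. }
  assert (Hft0 := Hnot t0 (conj (proj1 Ht0) (proj1 (proj2 Ht0)))).
  assert (Hclose : forall u, s <= u <= t0 -> Rabs (f u - f s) < dl).
  { intros u Hu. apply Hce. apply Rabs_def1; lra. }
  destruct (MVT_gen f s t0 D) as [xi [Hxi Heq]].
  - intros x Hx. rewrite Rmin_left in Hx by lra. rewrite Rmax_right in Hx by lra.
    apply Hd. lra.
  - intros x Hx. rewrite Rmin_left in Hx by lra. rewrite Rmax_right in Hx by lra.
    apply continuity_pt_filterlim. apply Hc. lra.
  - rewrite Rmin_left in Hxi by lra. rewrite Rmax_right in Hxi by lra.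
    assert (H0 : 0 <= D xi).
    { apply Hband. lra.
      assert (H1 := Hclose xi Hxi). apply Rabs_def2 in H1.
      assert (H2 := Hclose t0 (conj (Rlt_le _ _ (proj1 Ht0)) (Rle_refl _))). apply Rabs_def2 in H2.
      destruct (Req_dec xi s) as [->|Hne].
      - lra.
      - assert (f xi < c) by (apply Hnot; lra). lra. }
    assert (0 <= D xi * (t0 - s)) by (apply Rmult_le_pos; lra).
    lra.
Qed.

Lemma barrier_strict (f D : R -> R) a b c dl :
  a <= b -> 0 < dl ->
  (forall t, a <= t <= b -> continuous f t) ->
  (forall t, a < t < b -> is_derive f t (D t)) ->
  (forall t, a <= t <= b -> c - dl < f t < c + dl -> 0 <= D t) ->
  c < f a -> c < f b.
Proof.
  intros Hab Hdl Hc Hd Hband Ha.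
  set (m := Rmin (f a) (c + dl/2)).
  assert (Hm : c < m /\ m <= f a /\ m <= c + dl/2).
  { unfold m. split; [apply Rmin_glb_lt; lra|split; [apply Rmin_l|apply Rmin_r]]. }
  set (c' := (c + m)/2).
  assert (c <= c' - 0 /\ c' <= f a) by (unfold c'; lra).
  assert (c' <= f b); [|unfold c' in *; lra].
  apply (barrier f D a b c' (dl/2)); try assumption; try lra.
  intros t Ht Hb. apply Hband; [exact Ht|]. unfold c' in *; lra.
Qed.

Lemma chi_pos (chi : R * R -> R) (p : R * R) :
  continuous chi p -> chi p = 1 ->
  exists d, 0 < d /\ forall u, Rabs (u - fst p) < d -> 0 < chi (u, snd p).
Proof.
  intros Hc H1.
  assert (Hb := Hc (ball (chi p) (mkposreal (1/2) ltac:(lra))) (locally_ball _ _)).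
  destruct Hb as [d Hd]. exists d. split; [apply cond_pos|].
  intros u Hu. assert (Hq := Hd (u, snd p) (conj Hu (ball_center _ _))).
  change (Rabs (chi (u, snd p) - chi p) < 1/2) in Hq.
  rewrite H1 in Hq. apply Rabs_def2 in Hq. lra.
Qed.

Theorem lemma2p1 (L W l : R) (Omega3 : R * R -> Prop) (chi : R * R -> R) :
  0 < L -> 0 < W -> 0 < l ->
  open Omega3 -> bounded2 Omega3 -> smooth_boundary Omega3 ->
  (forall p, Omega2bar L W l p -> Omega3 p) ->
  smooth_compact_support_in Omega3 chi ->
  (forall p, Omega2bar L W l p -> chi p = 1) ->
  exists M0 : R, 0 < M0 /\
    forall (M : R) (gamma : R -> R) (Y : R * R -> R -> R -> R * R),
      M0 <= M ->
      smooth_on_01 gamma ->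
      (forall t, 0 <= t <= 1 -> 0 <= gamma t) ->
      (exists a b, 0 < a /\ a <= b /\ b < 1 /\
         forall t, 0 <= t <= 1 -> (t < a \/ b < t) -> gamma t = 0) ->
      (forall t, 1/4 <= t <= 3/4 -> gamma t = M) ->
      is_flow Omega3 gamma chi Y ->
      forall x, Omega2bar L W l x -> ~ Omega2bar L W l (Y x 0 1).
Proof.
  intros HL HW Hl _ _ _ H23 [Hsm _] Hchi1.
  assert (Hcont : forall p, continuous chi p) by exact (Hsm 0%nat).
  exists (2*(L+2*l)+2). split; [lra|].
  intros M gamma Y HM _ Hg0 _ HgM Hflow x Hx HY.
  assert (Hcl : closure2 Omega3 x).
  { intros P HP. exists x. split; [apply H23; exact Hx|apply locally_singleton; exact HP]. }
  destruct (Hflow x 0 Hcl ltac:(lra)) as [HY0 [Hc Hd]].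
  set (f := fun u => fst (Y x 0 u)).
  set (D := fun u => gamma u * chi (Y x 0 u)).
  assert (Hsnd : forall t, 0 <= t <= 1 -> snd (Y x 0 t) = snd x).
  { intros t Ht. destruct (MVT_gen (fun u => snd (Y x 0 u)) 0 t (fun _ => 0)) as [xi [_ Heq]].
    - intros u Hu. rewrite Rmin_left in Hu by lra. rewrite Rmax_right in Hu by lra.
      apply Hd. lra.
    - intros u Hu. rewrite Rmin_left in Hu by lra. rewrite Rmax_right in Hu by lra.
      apply continuity_pt_filterlim. apply Hc. lra.
    - simpl in Heq. rewrite HY0 in Heq. lra. }
  assert (HYe : forall t, 0 <= t <= 1 -> Y x 0 t = (f t, snd x)).
  { intros t Ht. rewrite <- (Hsnd t Ht). unfold f. destruct (Y x 0 t); reflexivity. }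
  assert (Hcf : forall t, 0 <= t <= 1 -> continuous f t) by (intros t Ht; apply Hc; exact Ht).
  assert (Hdf : forall t, 0 < t < 1 -> is_derive f t (D t)) by (intros t Ht; apply Hd; exact Ht).
  assert (Hband : forall c, Omega2bar L W l (c, snd x) -> exists d, 0 < d /\
            forall t, 0 <= t <= 1 -> c - d < f t < c + d -> 0 <= D t).
  { intros c Hc0.
    destruct (chi_pos chi (c, snd x) (Hcont _) (Hchi1 _ Hc0)) as [d [Hd0 Hdp]].
    exists d. split; [exact Hd0|]. intros t Ht Hft. unfold D. rewrite (HYe t Ht).
    apply Rmult_le_pos; [apply Hg0; exact Ht|]. apply Rlt_le. apply Hdp. simpl.
    apply Rabs_def1; lra. }
  destruct Hx as [Hx1 Hx2].
  destruct (Hband (-l)) as [d1 [Hd1 Hb1]]. { split; simpl; lra. }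
  destruct (Hband (L+l)) as [d2 [Hd2 Hb2]]. { split; simpl; lra. }
  assert (Hf0 : f 0 = fst x) by (unfold f; rewrite HY0; reflexivity).
  assert (Hlow : forall t, 0 <= t <= 1 -> -l <= f t).
  { intros t Ht. apply (barrier f D 0 t (-l) d1); try lra.
    - intros u Hu. apply Hcf. lra.
    - intros u Hu. apply Hdf. lra.
    - intros u Hu. apply Hb1. lra. }
  assert (Hf1 : f 1 <= L + l) by (destruct HY as [[_ H] _]; exact H).
  assert (Hhigh : forall t, 0 <= t <= 1 -> f t <= L + l).
  { intros t Ht. destruct (Rle_or_lt (f t) (L+l)) as [H|H]; [exact H|exfalso].
    assert (L + l < f 1); [|lra].
    apply (barrier_strict f D t 1 (L+l) d2); try lra.
    - intros u Hu. apply Hcf. lra.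
    - intros u Hu. apply Hdf. lra.
    - intros u Hu. apply Hb2. lra. }
  destruct (MVT_gen f (1/4) (3/4) D) as [xi [Hxi Heq]].
  - intros u Hu. rewrite Rmin_left in Hu by lra. rewrite Rmax_right in Hu by lra.
    apply Hdf. lra.
  - intros u Hu. rewrite Rmin_left in Hu by lra. rewrite Rmax_right in Hu by lra.
    apply continuity_pt_filterlim. apply Hcf. lra.
  - rewrite Rmin_left in Hxi by lra. rewrite Rmax_right in Hxi by lra.
    assert (HD : D xi = M).
    { unfold D. rewrite (HgM xi Hxi). rewrite (HYe xi) by lra.
      rewrite Hchi1; [ring|]. split; simpl; [split|lra].
      apply Hlow; lra. apply Hhigh; lra. }
    rewrite HD in Heq.
    assert (-l <= f (1/4)) by (apply Hlow; lra).
    assert (f (3/4) <= L + l) by (apply Hhigh; lra).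
    lra.
Qed.
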